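(* Let $p$ be a prime and $n\ge1$. There are only countably many subgroups $V$ of $\mathcal{L}_{n,p}$ with $\pi_1(V)>0$.
   Context: $\mathcal{L}_{n,p}=\left(\bigoplus_{\mathbb{Z}}(\mathbb{Z}/p\mathbb{Z})^n\right)\rtimes\mathbb{Z}$. For a subgroup $V\le\mathcal{L}_{n,p}$, $\pi_1(V)\in\{0,1,2,\dots\}$ is defined by: the image of $V$ under the projection $\mathcal{L}_{n,p}\to\mathbb{Z}$ is $\pi_1(V)\mathbb{Z}$. *)

(* Defs.v *)
From mathcomp Require Import all_boot all_algebra.
Set Implicit Arguments. Unset Strict Implicit. Unset Printing Implicit Defensive.
Import GRing.Theory Num.Theory.
Local Open Scope ring_scope.

(* Raw carrier of L_{n,p} = (\bigoplus_Z (Z/pZ)^n) \rtimes Z :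
   pairs (f, k) with f : int -> (F_p)^n and k : int.
   The group L_{n,p} itself is the set of pairs whose first component is
   finitely supported. *)
Definition Lraw (p n : nat) : Type := ((int -> 'rV['F_p]_n) * int)%type.

Definition finsupp (p n : nat) (f : int -> 'rV['F_p]_n) : Prop :=
  exists N : nat, forall i : int, (N < `|i|)%N -> f i = 0.

Definition inL (p n : nat) (x : Lraw p n) : Prop := finsupp x.1.

Definition Lmul (p n : nat) (x y : Lraw p n) : Lraw p n :=
  (fun i => x.1 i + y.1 (i - x.2), x.2 + y.2).

Definition Linv (p n : nat) (x : Lraw p n) : Lraw p n :=
  (fun i => - x.1 (i + x.2), - x.2).

Definition Lone (p n : nat) : Lraw p n := (fun _ => 0, 0).

Definition Lproj (p n : nat) (x : Lraw p n) : int := x.2.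

Definition is_subgroup (p n : nat) (V : Lraw p n -> Prop) : Prop :=
  [/\ forall x, V x -> inL x,
      V (Lone p n),
      forall x y, V x -> V y -> V (Lmul x y)
    & forall x, V x -> V (Linv x)].

Definition is_pi1 (p n : nat) (V : Lraw p n -> Prop) (d : nat) : Prop :=
  forall k : int, (exists x, V x /\ Lproj x = k) <-> (d%:Z %| k)%Z.

(* Main.v *)
Require Import Defs.
From mathcomp Require Import all_boot all_algebra.
From mathcomp Require Import zify.
From Stdlib Require Import Classical ClassicalEpsilon FunctionalExtensionality.
Import GRing.Theory Num.Theory.
Set Implicit Arguments. Unset Strict Implicit. Unset Printing Implicit Defensive.
Local Open Scope ring_scope.

Definition grp (p n : nat) (P : Lraw p n -> Prop) :=
  [/\ P (Lone p n), forall x y, P x -> P y -> P (Lmul x y) & forall x, P x -> P (Linv x)].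

Lemma conj_base (p n : nat) (u : Lraw p n) (f : int -> 'rV['F_p]_n) :
  Lmul (Lmul u (f, 0)) (Linv u) = ((fun i => f (i - u.2)), 0).
Proof.
rewrite /Lmul /Linv /=; f_equal; last by rewrite addr0 subrr.
apply: functional_extensionality => i.
by rewrite addr0 subrK addrAC subrr add0r.
Qed.

Lemma shift_nat (p n : nat) (P : Lraw p n -> Prop) (t : Lraw p n) (f : int -> 'rV['F_p]_n) :
  grp P -> P t -> P (f, 0) -> forall k : nat,
  P ((fun i => f (i - k%:Z * t.2)), 0) /\ P ((fun i => f (i + k%:Z * t.2)), 0).
Proof.
case=> P1 PM PI Pt Pf; elim=> [|k [IH1 IH2]].
  have -> : (fun i => f (i - 0%:Z * t.2)) = f.
    by apply: functional_extensionality => i; rewrite mul0r subr0.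
  have -> : (fun i => f (i + 0%:Z * t.2)) = f.
    by apply: functional_extensionality => i; rewrite mul0r addr0.
  by [].
split.
  have := PM _ _ (PM _ _ Pt IH1) (PI _ Pt); rewrite conj_base.
  congr (P (_, _)); apply: functional_extensionality => i; congr f.
  move: (t.2) => s; rewrite -addn1 PoszD mulrDl mul1r; lia.
have := PM _ _ (PM _ _ (PI _ Pt) IH2) (PI _ (PI _ Pt)); rewrite conj_base.
congr (P (_, _)); apply: functional_extensionality => i; congr f.
rewrite /=; move: (t.2) => s; rewrite -addn1 PoszD mulrDl mul1r; lia.
Qed.

Lemma shift_int (p n : nat) (P : Lraw p n -> Prop) (t : Lraw p n) (f : int -> 'rV['F_p]_n) :
  grp P -> P t -> P (f, 0) -> forall m : int,
  P ((fun i => f (i - m * t.2)), 0).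
Proof.
move=> gP Pt Pf [k|k]; first by case: (shift_nat gP Pt Pf k).
case: (shift_nat gP Pt Pf k.+1) => _ H.
congr (P (_, _)): H; apply: functional_extensionality => i; congr f.
by rewrite NegzE mulNr opprK.
Qed.

Lemma mul_inv_r (p n : nat) (x u : Lraw p n) : Lmul (Lmul x (Linv u)) u = x.
Proof.
case: x => x1 x2; rewrite /Lmul /Linv /=; f_equal; last by rewrite subrK.
apply: functional_extensionality => i; rewrite -addrA.
have -> : i - x2 + u.2 = i - (x2 - u.2) by lia.
by rewrite addNr addr0.
Qed.

Lemma mul_inv_l (p n : nat) (x u : Lraw p n) : Lmul (Lmul x u) (Linv u) = x.
Proof.
case: x => x1 x2; rewrite /Lmul /Linv /=; f_equal; last by rewrite addrK.
apply: functional_extensionality => i; rewrite -addrA.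
have -> : i - (x2 + u.2) + u.2 = i - x2 by lia.
by rewrite subrr addr0.
Qed.

Lemma V_sub (p n : nat) (V P : Lraw p n -> Prop) (t : Lraw p n) (d : int) :
  is_subgroup V -> grp P -> P t -> V t -> t.2 = d ->
  (forall f, V (f, 0) -> P (f, 0)) ->
  forall x, V x -> (d %| x.2)%Z -> P x.
Proof.
case=> _ V1 VM VI [P1 PM PI] Pt Vt td Hb.
suff H : forall N : nat, forall x, V x -> x.2 = N%:Z * d \/ x.2 = - (N%:Z * d) -> P x.
  move=> x Vx /dvdzP [[k|k] hk].
    by apply: (H k) => //; left.
  by apply: (H k.+1) => //; right; rewrite hk NegzE mulNr.
elim=> [|N IH] x Vx.
  rewrite mul0r oppr0 => hx; have {}hx : x.2 = 0 by case: hx.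
  by case: x Vx hx => x1 x2 /= Vx hx; subst x2; apply: Hb.
case=> hx.
  rewrite -(mul_inv_r x t); apply: PM => //; apply: IH; first by apply: VM => //; apply: VI.
  left; rewrite /= hx td; rewrite -addn1 PoszD mulrDl mul1r; lia.
rewrite -(mul_inv_l x t); apply: PM; last exact: PI.
apply: IH; first by apply: VM.
right; rewrite /= hx td; rewrite -addn1 PoszD mulrDl mul1r; lia.
Qed.

Inductive gen (p n : nat) (S : Lraw p n -> Prop) : Lraw p n -> Prop :=
| gen_base x : S x -> gen S x
| gen_one : gen S (Lone p n)
| gen_mul x y : gen S x -> gen S y -> gen S (Lmul x y)
| gen_inv x : gen S x -> gen S (Linv x).

Lemma gen_grp (p n : nat) (S : Lraw p n -> Prop) : grp (gen S).
Proof. split; [exact: gen_one | exact: gen_mul | exact: gen_inv]. Qed.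

Lemma gen_sub (p n : nat) (S V : Lraw p n -> Prop) :
  is_subgroup V -> (forall x, S x -> V x) -> forall x, gen S x -> V x.
Proof.
case=> _ V1 VM VI HS x; elim=> [y Sy|| y z _ Vy _ Vz| y _ Vy].
- exact: HS.
- exact: V1.
- exact: VM.
- exact: VI.
Qed.

Definition dec (p n : nat) (c : nat * seq 'rV['F_p]_n) : int -> 'rV['F_p]_n :=
  fun i => if (- (c.1)%:Z <= i) then nth 0 c.2 (absz (i + (c.1)%:Z)) else 0.

Lemma dec_seq (p n : nat) (K W : nat) (f : int -> 'rV['F_p]_n) :
  (forall i, (i < - K%:Z) || (W%:Z - K%:Z <= i) -> f i = 0) ->
  exists s, size s = W /\ dec (K, s) = f.
Proof.
move=> Hf; exists (mkseq (fun j => f (j%:Z - K%:Z)) W); split; first exact: size_mkseq.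
apply: functional_extensionality => i; rewrite /dec /=.
case: ifP => hi; last by rewrite Hf //; apply/orP; left; move/negbT: hi; lia.
case: (ltnP (absz (i + K%:Z)) W) => hw.
  rewrite nth_mkseq //; congr f; lia.
rewrite nth_default ?size_mkseq // Hf //; apply/orP; right; lia.
Qed.

Definition supp_in (p n : nat) (f : int -> 'rV['F_p]_n) (a b : int) :=
  forall i, (i < a) || (b < i) -> f i = 0.

Lemma tr2 (p n : nat) (P : Lraw p n -> Prop) (f g : int -> 'rV['F_p]_n) :
  P (f, 0) -> f = g -> P (g, 0).
Proof. by move=> H <-. Qed.

Lemma fg (p n : nat) (V : Lraw p n -> Prop) (t : Lraw p n) (d : nat) :
  is_subgroup V -> V t -> t.2 = d%:Z -> (0 < d)%N ->
  exists gs : seq (nat * seq 'rV['F_p]_n),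
   (forall g, g \in gs -> V (dec g, 0)) /\
   forall f, V (f, 0) ->
     gen (fun x => x = t \/ exists2 g, g \in gs & x = (dec g, 0)) (f, 0).
Proof.
move=> HV Vt td d0.
have gV : grp V by case: HV => _ a b c; split.
have [VS V1 VM VI] := HV.
pose T := {ffun 'I_d -> 'rV['F_p]_n}.
pose Lead (l : nat) (c : T) := exists g, V (g, 0) /\ supp_in g (- l%:Z) (d%:Z - 1)
   /\ forall r : 'I_d, g (nat_of_ord r)%:Z = c r.
have Lmono : forall l l' c, (l <= l')%N -> Lead l c -> Lead l' c.
  move=> l l' c ll' [g [Vg [sg hg]]]; exists g; split=> //; split=> //.
  move=> i hi; apply: sg; move: hi; lia.
have hch : forall c, exists l : nat, (exists l', Lead l' c) -> Lead l c.
  move=> c; case: (classic (exists l', Lead l' c)) => [[l' h]|h].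
    by exists l'.
  by exists 0%N.
pose lc c := proj1_sig (constructive_indefinite_description _ (hch c)).
have Hlc c : (exists l', Lead l' c) -> Lead (lc c) c :=
  proj2_sig (constructive_indefinite_description _ (hch c)).
pose K := maxn d (\max_(c : T) lc c).
have LK : forall l c, Lead l c -> Lead K c.
  move=> l c h; apply: (Lmono (lc c)); last by apply: Hlc; exists l.
  rewrite leq_max; apply/orP; right; exact: (@leq_bigmax T lc c).
have dK : (d <= K)%N by rewrite leq_max leqnn.
pose W := (K + d)%N.
pose sel (s : W.-tuple 'rV['F_p]_n) :=
  if excluded_middle_informative (V (dec (K, val s), 0)) then true else false.
pose gs := map (fun s : W.-tuple 'rV['F_p]_n => (K, val s)) (filter sel (enum {: W.-tuple 'rV['F_p]_n})).
exists gs; split.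
  move=> g /mapP [s]; rewrite mem_filter => /andP [hs _] ->; move: hs.
  by rewrite /sel; case: excluded_middle_informative.
set S := (fun x => _).
have gS : grp (gen S) := gen_grp S.
have St : gen S t by apply: gen_base; left.
have win : forall h, V (h, 0) -> supp_in h (- K%:Z) (d%:Z - 1) -> gen S (h, 0).
  move=> h Vh sh.
  have [s [ss hs]] := @dec_seq p n K W h (fun i hi => sh i ltac:(move: hi; rewrite /W; lia)).
  apply: gen_base; right; exists (K, s); last by rewrite hs.
  apply/mapP; exists (@Tuple W _ s (introT eqP ss)) => //.
  rewrite mem_filter mem_enum andbT /sel /=.
  by case: excluded_middle_informative => // []; rewrite hs.
have small : forall (l : nat) (m : int) f, (l <= K)%N -> V (f, 0) ->
    supp_in f (m * d%:Z - l%:Z) (m * d%:Z + d%:Z - 1) -> gen S (f, 0).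
  move=> l m f lK Vf sf.
  pose g := fun i => f (i + m * d%:Z).
  have Vg : V (g, 0).
    apply: (tr2 (shift_int gV Vt Vf (- m))).
    by apply: functional_extensionality => i; rewrite /g td mulNr opprK.
  have sg : supp_in g (- K%:Z) (d%:Z - 1).
    move=> i hi; apply: sf; move: hi; set md := m * d%:Z; lia.
  apply: (tr2 (shift_int gS St (win g Vg sg) m)).
  by apply: functional_extensionality => i; rewrite /g td subrK.
have main : forall B l, (l <= B)%N -> forall (m : int) f, V (f, 0) ->
    supp_in f (m * d%:Z - l%:Z) (m * d%:Z + d%:Z - 1) -> gen S (f, 0).
  elim=> [|B IH] l hl m f Vf sf.
    by apply: (small l m f _ Vf sf); move: hl; rewrite leqn0 => /eqP ->.
  case: (leqP l K) => lK; first exact: (small l m f).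
  pose c : T := [ffun r : 'I_d => f (m * d%:Z + (nat_of_ord r)%:Z)].
  pose g := fun i => f (i + m * d%:Z).
  have Vg : V (g, 0).
    apply: (tr2 (shift_int gV Vt Vf (- m))).
    by apply: functional_extensionality => i; rewrite /g td mulNr opprK.
  have Ll : Lead l c.
    exists g; split=> //; split.
      move=> i hi; apply: sf; move: hi; set md := m * d%:Z; lia.
    by move=> r; rewrite ffunE /g addrC.
  have [h [Vh [sh hc]]] := LK _ _ Ll.
  have Gh := win h Vh sh.
  pose h' := fun i => h (i - m * d%:Z).
  have Gh' : gen S (h', 0) by have := shift_int gS St Gh m; rewrite td.
  have Vh' : V (h', 0) by have := shift_int gV Vt Vh m; rewrite td.
  pose f' := fun i => f i - h' i.
  have Vf' : V (f', 0).
    have := VM _ _ Vf (VI _ Vh'); rewrite /Lmul /Linv /=.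
    rewrite oppr0 !addr0; congr (V (_, _)); apply: functional_extensionality => i.
    by rewrite subr0 addr0.
  have Gf' : gen S (f', 0).
    apply: (IH (l - d)%N _ (m - 1)) => //; first by move: hl d0; lia.
    move=> i hi; rewrite /f' /h'.
    case: (boolP (i < m * d%:Z - l%:Z)) => hlo.
      rewrite sf; last by apply/orP; left.
      rewrite sh ?subrr //; apply/orP; left; move: hlo lK; set md := m * d%:Z; lia.
    have hge : m * d%:Z <= i.
      move: hi hlo lK; rewrite mulrBl mul1r; set md := m * d%:Z; lia.
    case: (boolP (i <= m * d%:Z + d%:Z - 1)) => hhi.
      have hr : (absz (i - m * d%:Z)%R < d)%N by move: hge hhi; set md := m * d%:Z; lia.
      have := hc (Ordinal hr); rewrite ffunE /=.
      have -> : (absz (i - m * d%:Z)%R)%:Z = i - m * d%:Z by move: hge; set md := m * d%:Z; lia.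
      move=> ->; have -> : m * d%:Z + (i - m * d%:Z) = i by lia.
      by rewrite subrr.
    rewrite sf; last by apply/orP; right; move: hhi; set md := m * d%:Z; lia.
    rewrite sh ?subrr //; apply/orP; right; move: hhi; set md := m * d%:Z; lia.
  have -> : (f, 0) = Lmul (f', 0) (h', 0).
    rewrite /Lmul /= ?addr0; congr (_, _).
    by apply: functional_extensionality => i; rewrite subr0 /f' subrK.
  exact: gen_mul.
move=> f Vf; have [N HN] := VS _ Vf.
apply: (main (N * d + N)%N (N * d + N)%N (leqnn _) N%:Z) => //.
move=> i hi; apply: HN; have : (N <= N * d)%N by rewrite leq_pmulr.
move: hi; rewrite PoszD PoszM; set md := (N%:Z * d%:Z); lia.
Qed.
Unset Implicit Arguments.
Definition codeT (p n : nat) : countType :=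
  ((nat * seq 'rV['F_p]_n) * nat * seq (nat * seq 'rV['F_p]_n))%type.

Definition enc (p n : nat) (m : nat) : Lraw p n -> Prop :=
  match @unpickle (codeT p n) m with
  | Some (ct, d, gs) =>
      gen (fun x => x = (dec ct, d%:Z) \/ exists2 g, g \in gs & x = (dec g, 0))
  | None => fun _ => False
  end.

Theorem lemma2p2 (p n : nat) (hp : prime p) (hn : (1 <= n)%N) :
  exists e : nat -> (Lraw p n -> Prop),
    forall V : Lraw p n -> Prop,
      is_subgroup V ->
      (exists d : nat, is_pi1 V d /\ (0 < d)%N) ->
      exists m : nat, forall x : Lraw p n, e m x <-> V x.
Proof.
exists (@enc p n) => V HV [d [Hpi d0]].
have [t [Vt td]] := (Hpi d%:Z).2 (dvdzz _).
have [VS _ _ _] := HV.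
have [N HN] := VS _ Vt.
have [s [_ hs]] := @dec_seq p n N (N + N).+1 t.1
  (fun i hi => HN i ltac:(move: hi; lia)).
have [gs [Hgs Hf]] := fg HV Vt td d0.
have tE : t = (dec (N, s), d%:Z) by rewrite hs -td; case: t {Vt td HN hs Hf}.
exists (pickle (((N, s), d, gs) : codeT p n)) => x.
rewrite /enc pickleK; split.
  apply: gen_sub => // y [->|[g hg ->]]; first by rewrite -tE.
  exact: Hgs.
move=> Vx; apply: (V_sub HV (gen_grp _) _ Vt td).
- by apply: gen_base; left.
- by move=> f Vf; rewrite -tE; exact: Hf.
- exact: Vx.
- by apply/(Hpi _).1; exists x.
Qed.
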